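(* Let $k\ge2$, let $f:(k+1)^V\to\mathbb{R}_{\ge0}$ be non-negative, monotone and $k$-submodular with multilinear extension $F$, and let $OPT=\max_{S\in(k+1)^V}f(S)$. Run the meta-framework with $\delta=1/N$ where, at every iteration $t$ and for every $i\in[n]$, $v_{i,j_i(t)}(t)=1$ and $v_{i,j}(t)=0$ for $j\neq j_i(t)$, with $j_i(t)\in\arg\max_{j\in[k]}\frac{\partial F}{\partial x_{i,j}}(s(t))$ (ties broken arbitrarily). Then $s(N)\in\mathcal P$, in fact $\sum_{j}s_{i,j}(N)=1$ for every $i$, and for every $\varepsilon>0$ there is $N_0$ such that for all $N\ge N_0$, $F(s(N))\ge\frac12 OPT-\varepsilon$.
   Context: Let $V=[n]=\{1,\dots,n\}$ and let $k\ge 1$ be an integer. Write $(k+1)^V$ for the set of $k$-tuples $S=(S_1,\dots,S_k)$ of pairwise disjoint subsets of $V$. For $S,T\in(k+1)^V$ let $S\sqcap T=(S_1\cap T_1,\dots,S_k\cap T_k)$ and let $S\sqcup T$ be the tuple whose $j$-th component is $(S_j\cup T_j)\setminus\bigcup_{l\neq j}(S_l\cup T_l)$. A function $f:(k+1)^V\to\mathbb{R}$ is $k$-submodular if $f(S)+f(T)\ge f(S\sqcap T)+f(S\sqcup T)$ for all $S,T\in(k+1)^V$. Write $S\preceq T$ if $S_j\subseteq T_j$ for all $j$; $f$ is monotone if $S\preceq T$ implies $f(S)\le f(T)$. Let $\mathcal P=\{x\in[0,1]^{n\times k}:\sum_{j=1}^k x_{i,j}\le 1\ \forall i\in[n]\}$.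 The multilinear extension of $f$ is the polynomial $F(x)=\sum_{S\in(k+1)^V} f(S_1,\dots,S_k)\Big(\prod_{j\in[k]}\prod_{i\in S_j}x_{i,j}\Big)\prod_{i\in V\setminus\bigcup_j S_j}\Big(1-\sum_{j=1}^k x_{i,j}\Big)$, considered on $\mathcal P$. Meta-framework: fix a positive integer $N$ and $\delta=1/N$. Set $s(0)=0\in\mathbb{R}^{n\times k}$. For $t=0,1,\dots,N-1$, choose a direction $v(t)\in[0,1]^{n\times k}$ with $\sum_{j=1}^k v_{i,j}(t)=1$ for every $i\in[n]$, and set $s(t+1)=s(t)+\delta\,v(t)$. The output is $s(N)$. *)

(* Defs.v *)
From mathcomp Require Import all_boot all_order all_algebra.
From mathcomp Require Import all_classical all_reals all_analysis.
Set Implicit Arguments. Unset Strict Implicit. Unset Printing Implicit Defensive.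
Import Order.TTheory GRing.Theory Num.Theory.
Local Open Scope ring_scope.

(* (k+1)^V with V = 'I_n : k-tuples (S_1,...,S_k) of pairwise disjoint
   subsets of V (components indexed by 'I_k, i.e. j = 0..k-1). *)
Definition raw_ktuple (n k : nat) := {ffun 'I_k -> {set 'I_n}}.

Definition pdisj (n k : nat) (S : raw_ktuple n k) : bool :=
  [forall j1 : 'I_k, forall j2 : 'I_k, (j1 != j2) ==> [disjoint S j1 & S j2]].

Definition ktuple (n k : nat) := {S : raw_ktuple n k | pdisj S}.

Definition kmeet (n k : nat) (S T : raw_ktuple n k) : raw_ktuple n k :=
  [ffun j => S j :&: T j].

Definition kjoin (n k : nat) (S T : raw_ktuple n k) : raw_ktuple n k :=
  [ffun j => (S j :|: T j) :\: \bigcup_(l | l != j) (S l :|: T l)].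

(* Since ⊓ and ⊔ of
   elements of (k+1)^V are again in (k+1)^V, we quantify over the elements
   U, W of (k+1)^V whose underlying tuples are S ⊓ T and S ⊔ T. *)
Definition k_submodular (R : realType) (n k : nat) (f : ktuple n k -> R) :=
  forall S T U W : ktuple n k,
    val U = kmeet (val S) (val T) -> val W = kjoin (val S) (val T) ->
    f U + f W <= f S + f T.

Definition kle (n k : nat) (S T : ktuple n k) : bool :=
  [forall j : 'I_k, val S j \subset val T j].

Definition k_monotone (R : realType) (n k : nat) (f : ktuple n k -> R) :=
  forall S T : ktuple n k, kle S T -> f S <= f T.

(* OPT = max_S f(S)  (f is non-negative, so 0 is a neutral start value) *)
Definition OPT (R : realType) (n k : nat) (f : ktuple n k -> R) : R :=
  \big[Num.max/0]_(S : ktuple n k) f S.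

Definition multilinear_ext (R : realType) (n k : nat) (f : ktuple n k -> R)
    (x : 'M[R]_(n, k)) : R :=
  \sum_(S : ktuple n k)
     f S * (\prod_(j < k) \prod_(i in val S j) x i j)
         * \prod_(i in ~: \bigcup_(j < k) val S j) (1 - \sum_(j < k) x i j).

Definition in_P (R : realType) (n k : nat) (x : 'M[R]_(n, k)) : Prop :=
  (forall i j, 0 <= x i j <= 1) /\ (forall i, \sum_(j < k) x i j <= 1).

(* A run of the meta-framework with delta = 1/N and the greedy direction:
   s t is s(t); jsel t i is the chosen j_i(t), an argmax over j of the
   partial derivative dF/dx_{i,j}(s(t)) (directional derivative of F at s(t)
   along the unit matrix e_{i,j}); ties broken arbitrarily (any choice). *)
Definition greedy_run (R : realType) (n k : nat) (F : 'M[R]_(n, k) -> R)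
    (N : nat) (s : nat -> 'M[R]_(n, k)) (jsel : nat -> 'I_n -> 'I_k) : Prop :=
  [/\ s 0%N = 0,
      (forall t, (t < N)%N -> forall i (j : 'I_k),
          'D_(delta_mx i j) F (s t) <= 'D_(delta_mx i (jsel t i)) F (s t)) &
      (forall t, (t < N)%N ->
          s t.+1 = s t + N%:R^-1 *: \matrix_(i < n, j < k) ((j == jsel t i)%:R : R))].

(* Main.v *)
Require Import Defs.
From mathcomp Require Import all_boot all_order all_algebra.
From mathcomp Require Import all_classical all_reals all_analysis.
From mathcomp Require Import ring lra.
Import Order.TTheory GRing.Theory Num.Theory.
Local Open Scope ring_scope.
Set Implicit Arguments. Unset Strict Implicit.

Section ML.
Variables (R : realType) (n k : nat).
Definition asg := {ffun 'I_n -> option 'I_k}.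
Definition upd (a : asg) (i : 'I_n) (b : option 'I_k) : asg :=
  [ffun m => if m == i then b else a m].

Lemma upd_at a i b : upd a i b i = b.
Proof. by rewrite ffunE eqxx. Qed.
Lemma upd_ne a i b m : m != i -> upd a i b m = a m.
Proof. by move=> /negPf h; rewrite ffunE h. Qed.
Lemma upd_upd a i b c : upd (upd a i b) i c = upd a i c.
Proof. by apply/ffunP=> m; rewrite !ffunE; case: eqP. Qed.
Lemma upd_id a i : upd a i (a i) = a.
Proof. by apply/ffunP=> m; rewrite !ffunE; case: eqP => // ->. Qed.

Lemma sum_option (F : option 'I_k -> R) :
  \sum_b F b = F None + \sum_j F (Some j).
Proof.
rewrite (bigD1 None) //=; congr (_ + _).
rewrite (reindex_omap Some (fun b => b)) /=; last by case.
by apply: eq_bigl => j; rewrite eqxx.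
Qed.

Definition wt (x : 'M[R]_(n, k)) m (b : option 'I_k) : R :=
  if b is Some j then x m j else 1 - \sum_j x m j.
Definition Wt x (a : asg) := \prod_m wt x m (a m).
Definition ML (g : asg -> R) x := \sum_a g a * Wt x a.
Definition Md (i : 'I_n) (j : 'I_k) (g : asg -> R) : asg -> R :=
  fun a => g (upd a i (Some j)) - g (upd a i None).

Lemma sum_wt x m : \sum_b wt x m b = 1.
Proof. by rewrite sum_option /= subrK. Qed.

Lemma sum_Wt x : \sum_a Wt x a = 1.
Proof.
rewrite /Wt -(bigA_distr_bigA (fun m b => wt x m b)).
by rewrite big1 // => m _; rewrite sum_wt.
Qed.

Definition inQ (x : 'M[R]_(n,k)) := (forall i j, 0 <= x i j) /\ (forall i, \sum_j x i j <= 1).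

Lemma Wt_ge0 x a : inQ x -> 0 <= Wt x a.
Proof.
move=> [h1 h2]; apply: prodr_ge0 => m _; case: (a m) => [j|] /=.
  exact: h1.
by rewrite subr_ge0.
Qed.

Lemma ML_le g c x : inQ x -> (forall a, g a <= c) -> ML g x <= c.
Proof.
move=> hx hg; rewrite -[c]mulr1 -(sum_Wt x) mulr_sumr.
by apply: ler_sum => a _; apply: ler_wpM2r; [apply: Wt_ge0|].
Qed.

Lemma ML_ge g c x : inQ x -> (forall a, c <= g a) -> c <= ML g x.
Proof.
move=> hx hg; rewrite -[c]mulr1 -(sum_Wt x) mulr_sumr.
by apply: ler_sum => a _; apply: ler_wpM2r; [apply: Wt_ge0|].
Qed.

Lemma sum_at (i : 'I_n) (b : option 'I_k) (K : asg -> R) :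
  \sum_(a : asg) (a i == b)%:R * K a = \sum_(a : asg) (a i == None)%:R * K (upd a i b).
Proof.
pose swp c := if c == None then b else if c == b then None else c.
have swpK : involutive swp.
  move=> c; rewrite /swp.
  have [->|cN] := eqVneq c None.
    rewrite eqxx; have [->|bN] := eqVneq b None; first by [].
    by rewrite ?(negPf bN) ?eqxx.
  have [->|cb] := eqVneq c b; first by rewrite ?eqxx ?(negPf cN).
  by rewrite ?(negPf cN) ?(negPf cb).
pose sg (a : asg) := upd a i (swp (a i)).
have sgK : involutive sg.
  by move=> a; rewrite /sg upd_at swpK upd_upd upd_id.
rewrite (reindex_inj (inv_inj sgK)) /=; apply: eq_bigr => a _.
rewrite /sg upd_at; case: (eqVneq (a i) None) => [e|aN].
  by rewrite /swp e !eqxx.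
rewrite mul0r; suff -> : (swp (a i) == b) = false by rewrite mul0r.
rewrite /swp (negPf aN); case: (eqVneq (a i) b) => [e|ab]; last by rewrite (negPf ab); apply/negPf.
by rewrite -e eq_sym (negPf aN).
Qed.

Definition Pm x (a : asg) i := \prod_(m | m != i) wt x m (a m).

Lemma Wt_split x a i : Wt x a = wt x i (a i) * Pm x a i.
Proof. by rewrite /Wt (bigD1 i). Qed.

Lemma Pm_upd x a i b : Pm x (upd a i b) i = Pm x a i.
Proof. by apply: eq_bigr => m mi; rewrite upd_ne. Qed.

Lemma sum_ind (T : finType) (t : T) : \sum_(u : T) (t == u)%:R = 1 :> R.
Proof.
rewrite (bigD1 t) //= eqxx big1 ?addr0 // => u ut.
by rewrite eq_sym (negPf ut).
Qed.

Lemma sum_dec i (H : asg -> R) :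
  \sum_a H a = \sum_(b' : option 'I_k) \sum_(a : asg) (a i == b')%:R * H a.
Proof.
rewrite exchange_big /=; apply: eq_bigr => a _.
by rewrite -mulr_suml sum_ind mul1r.
Qed.

Lemma key_sum x g i b :
  \sum_(a : asg) g a * ((a i == b)%:R * Pm x a i) =
  \sum_(a : asg) g (upd a i b) * Wt x a.
Proof.
have -> : \sum_(a : asg) g a * ((a i == b)%:R * Pm x a i) =
          \sum_(a : asg) (a i == b)%:R * (g a * Pm x a i).
  by apply: eq_bigr => a _; rewrite mulrCA.
rewrite sum_at [RHS](sum_dec i).
have -> : \sum_(b' : option 'I_k) \sum_(a : asg) (a i == b')%:R * (g (upd a i b) * Wt x a)
  = \sum_(b' : option 'I_k) (wt x i b' * \sum_(a : asg) (a i == None)%:R * (g (upd a i b) * Pm x a i)).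
  apply: eq_bigr => b' _; rewrite sum_at mulr_sumr; apply: eq_bigr => a _.
  rewrite upd_upd (Wt_split _ _ i) upd_at Pm_upd.
  by ring.
rewrite -mulr_suml sum_wt mul1r; apply: eq_bigr => a _.
by rewrite Pm_upd.
Qed.

Lemma shift_row (x : 'M[R]_(n,k)) (h : R) i j m : m != i -> forall l, (x + h *: delta_mx i j) m l = x m l.
Proof. by move=> mi l; rewrite !mxE (negPf mi) /= mulr0 addr0. Qed.

Lemma Pm_shift (x : 'M[R]_(n,k)) (h : R) i j a : Pm (x + h *: delta_mx i j) a i = Pm x a i.
Proof.
apply: eq_bigr => m mi; rewrite /wt; case: (a m) => [l|]; first exact: shift_row.
by congr (_ - _); apply: eq_bigr => l _; apply: shift_row.
Qed.

Lemma sum_delta j : \sum_(l < k) (l == j)%:R = 1 :> R.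
Proof. by under eq_bigr do rewrite eq_sym; exact: sum_ind. Qed.

Lemma wt_shift (x : 'M[R]_(n,k)) (h : R) i j b :
  wt (x + h *: delta_mx i j) i b = wt x i b + h * ((b == Some j)%:R - (b == None)%:R).
Proof.
case: b => [l|]; rewrite /wt.
  rewrite !mxE eqxx /= subr0; congr (_ + _); rewrite mulrC; congr (_ * _).
have -> : (None == Some j) = false by [].
rewrite eqxx sub0r mulrN1.
have -> : \sum_(l < k) (x + h *: delta_mx i j) i l = \sum_(l < k) x i l + h.
  have -> : \sum_(l < k) (x + h *: delta_mx i j) i l = \sum_(l < k) (x i l + h * (l == j)%:R).
    by apply: eq_bigr => l _; rewrite !mxE eqxx.
  by rewrite big_split /= -mulr_sumr sum_delta mulr1.
by rewrite opprD addrA.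
Qed.

Lemma ML_shift g (x : 'M[R]_(n,k)) (h : R) i j :
  ML g (x + h *: delta_mx i j) = ML g x + h * ML (Md i j g) x.
Proof.
rewrite /ML /Md.
have -> : \sum_a g a * Wt (x + h *: delta_mx i j) a =
   \sum_a g a * Wt x a + h * (\sum_(a : asg) g a * (((a i == Some j)%:R) * Pm x a i)
                          - \sum_(a : asg) g a * (((a i == None)%:R) * Pm x a i)).
  rewrite -sumrB mulr_sumr -big_split /=; apply: eq_bigr => a _.
  rewrite (Wt_split _ _ i) Pm_shift wt_shift (Wt_split x a i).
  rewrite mulrDl mulrDr; congr (_ + _).
  by ring.
rewrite !key_sum -sumrB; congr (_ + h * _); apply: eq_bigr => a _.
by rewrite mulrBl.
Qed.

Definition mle (A B : 'M[R]_(n,k)) := forall i j, A i j <= B i j.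
Definition pT := ('I_n * 'I_k)%type.
Definition dsum (L : seq pT) (d : pT -> R) : 'M[R]_(n,k) :=
  \sum_(p <- L) d p *: delta_mx p.1 p.2.

Lemma mle_refl A : mle A A. Proof. by move=> i j. Qed.
Lemma mle_trans A B C : mle A B -> mle B C -> mle A C.
Proof. by move=> h1 h2 i j; apply: le_trans (h1 i j) (h2 i j). Qed.

Lemma dsum_ge0 L d : (forall p, 0 <= d p) -> mle 0 (dsum L d).
Proof.
move=> hd i j; rewrite /dsum summxE mxE; apply: sumr_ge0 => p _.
by rewrite !mxE; apply: mulr_ge0 => //; case: (_ && _).
Qed.

Lemma mle_addr A D : mle 0 D -> mle A (A + D).
Proof. by move=> h i j; rewrite mxE lerDl; have := h i j; rewrite mxE. Qed.

Lemma dsum_cons p L d : dsum (p :: L) d = d p *: delta_mx p.1 p.2 + dsum L d.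
Proof. by rewrite /dsum big_cons. Qed.

Lemma tele_le g lo hi (U : pT -> R) :
  (forall p y, mle lo y -> mle y hi -> ML (Md p.1 p.2 g) y <= U p) ->
  forall L d x, (forall p, 0 <= d p) -> mle lo x -> mle (x + dsum L d) hi ->
  ML g (x + dsum L d) <= ML g x + \sum_(p <- L) d p * U p.
Proof.
move=> hU; elim=> [|p L IH] d x hd hlo hhi.
  by rewrite /dsum !big_nil !addr0.
have hp : mle 0 (d p *: delta_mx p.1 p.2).
  by move=> i j; rewrite !mxE; apply: mulr_ge0 => //; case: (_ && _).
rewrite dsum_cons addrA big_cons.
have hx : mle x hi.
  apply: mle_trans hhi; apply: mle_addr; apply: dsum_ge0 => q.
  exact: hd.
apply: le_trans (IH d _ hd _ _) _.
- by apply: mle_trans hlo _; apply: mle_addr.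
- by rewrite -addrA -dsum_cons.
rewrite ML_shift addrA lerD2r lerD2l; apply: ler_wpM2l; first exact: hd.
exact: hU.
Qed.

Lemma tele_ge g lo hi (U : pT -> R) :
  (forall p y, mle lo y -> mle y hi -> U p <= ML (Md p.1 p.2 g) y) ->
  forall L d x, (forall p, 0 <= d p) -> mle lo x -> mle (x + dsum L d) hi ->
  ML g x + \sum_(p <- L) d p * U p <= ML g (x + dsum L d).
Proof.
move=> hU; elim=> [|p L IH] d x hd hlo hhi.
  by rewrite /dsum !big_nil !addr0.
have hp : mle 0 (d p *: delta_mx p.1 p.2).
  by move=> i j; rewrite !mxE; apply: mulr_ge0 => //; case: (_ && _).
rewrite dsum_cons addrA big_cons.
have hx : mle x hi.
  apply: mle_trans hhi; apply: mle_addr; apply: dsum_ge0 => q.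
  exact: hd.
apply: le_trans (IH d _ hd _ _).
- rewrite ML_shift addrA lerD2r lerD2l; apply: ler_wpM2l; first exact: hd.
  exact: hU.
- by apply: mle_trans hlo _; apply: mle_addr.
- by rewrite -addrA -dsum_cons.
Qed.

Lemma dsum_full (D : 'M[R]_(n,k)) :
  D = dsum (index_enum ('I_n * 'I_k)%type) (fun p => D p.1 p.2).
Proof.
rewrite {1}[D]matrix_sum_delta /dsum pair_bigA /=.
by [].
Qed.
End ML.

Section KT.
Variables (n k : nat).

Definition tup_raw (a : asg n k) : raw_ktuple n k := [ffun j => [set i | a i == Some j]].

Lemma tup_pdisj a : pdisj (tup_raw a).
Proof.
apply/forallP => j1; apply/forallP => j2; apply/implyP => ne.
apply/pred0P => i /=; rewrite !ffunE !inE.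
case: (eqVneq (a i) (Some j1)) => //= ->.
by apply/negP => /eqP [] e; rewrite e eqxx in ne.
Qed.

Definition tup (a : asg n k) : ktuple n k := exist _ (tup_raw a) (tup_pdisj a).

Definition asn (S : ktuple n k) : asg n k := [ffun i => [pick j | i \in val S j]].

Lemma tupK : cancel tup asn.
Proof.
move=> a; apply/ffunP => i; rewrite ffunE /=.
case: pickP => [j|h]; first by rewrite ffunE inE => /eqP.
case e: (a i) => [j|] //.
by have := h j; rewrite ffunE inE e eqxx.
Qed.

Lemma asnK : cancel asn tup.
Proof.
case=> S hS; apply/val_inj => /=; apply/ffunP => j; rewrite ffunE.
apply/setP => i; rewrite inE ffunE /=.
case: pickP => [j' hj'|h]; last by rewrite (h j).
apply/idP/idP => [/eqP [] <- //|hj].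
case: (eqVneq j' j) => [->//|ne].
move/forallP: hS => /(_ j') /forallP /(_ j) /implyP /(_ ne).
by move/pred0P => /(_ i) /=; rewrite hj' hj.
Qed.

Lemma ktuple_val_inj (S T : ktuple n k) : val S = val T -> S = T.
Proof. exact: val_inj. Qed.
End KT.

Section Eq.
Variables (R : realType) (n k : nat).

Lemma mem_bigcup_tup (a : asg n k) i :
  (i \in \bigcup_(j < k) val (tup a) j) = (a i != None).
Proof.
apply/bigcupP/idP => [[j _]|]; first by rewrite /= ffunE inE => /eqP ->.
case e: (a i) => [j|] // _; exists j => //; by rewrite /= ffunE inE e.
Qed.

Lemma prod_tup (x : 'M[R]_(n,k)) (a : asg n k) :
  (\prod_(j < k) \prod_(i in val (tup a) j) x i j)
   * \prod_(i in ~: \bigcup_(j < k) val (tup a) j) (1 - \sum_(j < k) x i j)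
  = Wt x a.
Proof.
have -> : \prod_(j < k) \prod_(i in val (tup a) j) x i j =
          \prod_i (if a i is Some j then x i j else 1).
  have -> : \prod_(j < k) \prod_(i in val (tup a) j) x i j =
            \prod_(j < k) \prod_i (if a i == Some j then x i j else 1).
    apply: eq_bigr => j _; rewrite big_mkcond; apply: eq_bigr => i _.
    by rewrite /= ffunE inE.
  rewrite exchange_big; apply: eq_bigr => i _.
  case e: (a i) => [j|].
    rewrite (bigD1 j) //= eqxx big1 ?mulr1 // => l lj.
    by case: eqP => // -[] e'; rewrite e' eqxx in lj.
  by rewrite big1.
have -> : \prod_(i in ~: \bigcup_(j < k) val (tup a) j) (1 - \sum_(j < k) x i j) =
          \prod_i (if a i is None then 1 - \sum_(j < k) x i j else 1).
  rewrite big_mkcond; apply: eq_bigr => i _.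
  by rewrite inE mem_bigcup_tup negbK; case: (a i).
rewrite -big_split; apply: eq_bigr => i _ /=.
by case: (a i) => [j|] /=; rewrite ?mulr1 ?mul1r.
Qed.

Lemma ML_eq (f : ktuple n k -> R) :
  multilinear_ext f = ML (fun a => f (tup a)).
Proof.
apply: funext => x.
rewrite /multilinear_ext /ML (reindex (@tup n k)) /=; last first.
  by exists (@asn n k) => b _; [rewrite tupK | rewrite asnK].
by apply: eq_bigr => a _; rewrite -mulrA prod_tup.
Qed.
End Eq.

Section Sub.
Variables (n k : nat).
Implicit Types (u v : asg n k).

Lemma tup_meet u v :
  kmeet (val (tup u)) (val (tup v)) = val (tup [ffun m => if u m == v m then u m else None]).
Proof.
apply/ffunP => j; rewrite !ffunE; apply/setP => m; rewrite !inE !ffunE.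
case: (eqVneq (u m) (v m)) => [->|ne]; first by rewrite andbb.
apply/negbTE/negP => /andP [/eqP e1 /eqP e2].
by rewrite e1 e2 eqxx in ne.
Qed.

Lemma tup_join u v : (forall m, u m = None \/ v m = None \/ u m = v m) ->
  kjoin (val (tup u)) (val (tup v)) = val (tup [ffun m => if u m is Some _ then u m else v m]).
Proof.
move=> huv; apply/ffunP => j; rewrite !ffunE; apply/setP => m.
set w := [ffun m => if u m is Some _ then u m else v m].
have H0 : forall l, (m \in ([set i | u i == Some l] :|: [set i | v i == Some l])) = (w m == Some l).
  move=> l; rewrite !inE /w ffunE.
  case: (huv m) => [->|[->|->]] /=.
  - by case: (v m).
  - by case: (u m) => [z|] //=; rewrite orbF.
  - by rewrite orbb; case: (v m).
have H : forall l, (m \in (val (tup u) l :|: val (tup v) l)) = (w m == Some l).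
  by move=> l; rewrite !ffunE H0 /w ffunE.
rewrite finset.in_setD H0 inE.
case: (eqVneq (w m) (Some j)) => [e|ne]; last by rewrite andbF.
rewrite andbT; apply/negP => /bigcupP [l lj]; rewrite H e => /eqP [] e'.
by rewrite e' eqxx in lj.
Qed.
End Sub.

Section G.
Variables (R : realType) (n k : nat) (f : ktuple n k -> R).
Definition gf : asg n k -> R := fun a => f (tup a).

Lemma g_mono : k_monotone f -> forall i j a, 0 <= Md i j gf a.
Proof.
move=> hm i j a; rewrite /Md subr_ge0; apply: hm.
rewrite /kle; apply/forallP => j'; apply/fintype.subsetP => m; rewrite !ffunE !inE !ffunE.
by case: (m == i).
Qed.

Lemma g_DR : k_submodular f -> forall i j r l a, Md r l (Md i j gf) a <= 0.
Proof.
move=> hs i j r l a; rewrite /Md.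
case: (eqVneq r i) => [->|ri].
  by rewrite !upd_upd subrr.
have ir : i != r by rewrite eq_sym.
set b := upd (upd a r None) i None.
set S := upd b i (Some j); set T := upd b r (Some l).
have e1 : upd (upd a r (Some l)) i (Some j) = upd S r (Some l).
  apply/ffunP => m; rewrite !ffunE.
  case: (eqVneq m i) => [e|mi]; first by rewrite ?e (negPf ir).
  by case: (eqVneq m r).
have e2 : upd (upd a r (Some l)) i None = T.
  apply/ffunP => m; rewrite !ffunE.
  case: (eqVneq m i) => [e|mi]; first by rewrite ?e (negPf ir).
  by case: (eqVneq m r).
have e3 : upd (upd a r None) i (Some j) = S.
  apply/ffunP => m; rewrite !ffunE.
  by case: (m == i).
rewrite e1 e2 e3.
have hmeet : val (tup b) = kmeet (val (tup S)) (val (tup T)).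
  rewrite tup_meet; congr (val (tup _)); apply/ffunP => m; rewrite !ffunE.
  case: (eqVneq m i) => [e|mi]; first by rewrite ?e ?eqxx ?(negPf ir) ?(negPf ri).
  case: (eqVneq m r) => [e|mr]; first by rewrite ?e ?eqxx ?(negPf ir) ?(negPf ri).
  by rewrite ?(negPf mi) ?(negPf mr) ?eqxx; case: (a m).
have hjoin : val (tup (upd S r (Some l))) = kjoin (val (tup S)) (val (tup T)).
  rewrite tup_join; last first.
    move=> m; rewrite !ffunE.
    case: (eqVneq m i) => [e|mi]; first by rewrite ?e ?eqxx ?(negPf ir); right; left.
    case: (eqVneq m r) => [e|mr]; first by rewrite ?e ?eqxx; left.
    by right; right.
  congr (val (tup _)); apply/ffunP => m; rewrite !ffunE.
  case: (eqVneq m i) => [e|mi]; first by rewrite ?e ?eqxx ?(negPf ir) ?(negPf ri).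
  case: (eqVneq m r) => [e|mr]; first by rewrite ?e ?eqxx ?(negPf ir) ?(negPf ri).
  by rewrite ?(negPf mi) ?(negPf mr) ?eqxx; case: (a m).
have := hs (tup S) (tup T) (tup b) (tup (upd S r (Some l))) hmeet hjoin.
rewrite /gf; lra.
Qed.
End G.

Section O.
Variables (R : realType) (n k : nat) (f : ktuple n k -> R).

Lemma f_le_OPT S : f S <= OPT f.
Proof. by rewrite /OPT (bigD1 S) //= le_max lexx. Qed.

Lemma g_le_OPT a : gf f a <= OPT f.
Proof. exact: f_le_OPT. Qed.

Lemma OPT_attained : (forall S, 0 <= f S) -> exists o, OPT f <= gf f o.
Proof.
move=> f0; rewrite /OPT.
apply: (big_ind (fun x => exists o, x <= gf f o)).
- by exists ([ffun _ => None] : asg n k); apply: f0.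
- move=> x1 y1 [] o1 h1 [] o2 h2.
  case: (leP (gf f o1) (gf f o2)) => h.
    by exists o2; rewrite ge_max h2 (le_trans h1 h).
  by exists o1; rewrite ge_max h1 (le_trans h2 (ltW h)).
- move=> S _; exists (asn S); by rewrite /gf asnK.
Qed.
End O.

Section Main.
Variables (R : realType) (n k : nat) (g : asg n k -> R) (B : R).
Hypotheses (g0 : forall a, 0 <= g a) (gB : forall a, g a <= B)
  (gmono : forall i j a, 0 <= Md i j g a)
  (gDR : forall i j r l a, Md r l (Md i j g) a <= 0).

Lemma B_ge0 : 0 <= B.
Proof. exact: le_trans (g0 [ffun _ => None]) (gB _). Qed.

Lemma MdMd_ge i j r l a : - (B + B) <= Md r l (Md i j g) a.
Proof.
rewrite /Md; have := g0 (upd (upd a r (Some l)) i (Some j)).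
have := gB (upd (upd a r (Some l)) i None).
have := gB (upd (upd a r None) i (Some j)).
have := g0 (upd (upd a r None) i None).
lra.
Qed.

Lemma inQ_le (y z : 'M[R]_(n,k)) : mle 0 y -> mle y z -> inQ z -> inQ y.
Proof.
move=> h0 hyz [_ hz]; split.
  by move=> i j; have := h0 i j; rewrite mxE.
move=> i; apply: le_trans (hz i); apply: ler_sum => j _; exact: hyz.
Qed.

Definition msum (D : 'M[R]_(n,k)) := \sum_(p : pT n k) D p.1 p.2.

Lemma ML_anti (x hi : 'M[R]_(n,k)) (p : pT n k) z :
  mle 0 x -> inQ hi -> mle x z -> mle z hi ->
  ML (Md p.1 p.2 g) z <= ML (Md p.1 p.2 g) x.
Proof.
move=> hx hQ hxz hzh.
have -> : z = x + dsum (index_enum _) (fun q => (z - x) q.1 q.2).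
  by rewrite -dsum_full addrC subrK.
have := @tele_le R n k (Md p.1 p.2 g) x z (fun _ => 0) _ (index_enum _)
   (fun q => (z - x) q.1 q.2) x.
rewrite big1 ?addr0; last by move=> q _; rewrite mulr0.
apply.
- move=> q y hxy hyz; apply: ML_le; last by move=> a; exact: gDR.
  apply: inQ_le hQ; first exact: mle_trans hx hxy.
  exact: mle_trans hyz hzh.
- by move=> q; rewrite !mxE subr_ge0.
- exact: mle_refl.
- by rewrite -dsum_full addrC subrK.
Qed.

Lemma ML_lip (x hi : 'M[R]_(n,k)) (p : pT n k) z :
  mle 0 x -> inQ hi -> mle x z -> mle z hi ->
  ML (Md p.1 p.2 g) x - (B + B) * msum (z - x) <= ML (Md p.1 p.2 g) z.
Proof.
move=> hx hQ hxz hzh.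
have ez : z = x + dsum (index_enum _) (fun q => (z - x) q.1 q.2).
  by rewrite -dsum_full addrC subrK.
have key : ML (Md p.1 p.2 g) x + \sum_(q <- index_enum (pT n k)) (z - x) q.1 q.2 * (- (B + B))
   <= ML (Md p.1 p.2 g) (x + dsum (index_enum (pT n k)) (fun q => (z - x) q.1 q.2)).
  apply: (@tele_ge R n k (Md p.1 p.2 g) x z (fun _ => - (B + B))).
  - move=> q y hxy hyz; apply: ML_ge; last by move=> a; exact: MdMd_ge.
    apply: inQ_le hQ; first exact: mle_trans hx hxy.
    exact: mle_trans hyz hzh.
  - by move=> q; rewrite !mxE subr_ge0.
  - exact: mle_refl.
  - by rewrite -ez.
rewrite -ez in key; apply: le_trans key.
rewrite /msum mulr_sumr -sumrN; apply: lerD => //; apply: ler_sum => q _.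
by rewrite mulrN mulrC.
Qed.

Definition Vm (jt : 'I_n -> 'I_k) : 'M[R]_(n,k) := \matrix_(i, j) ((j == jt i)%:R).
Definition Om (o : asg n k) : 'M[R]_(n,k) := \matrix_(i, j) ((o i == Some j)%:R).

Lemma mle_scale (a : R) (D : 'M[R]_(n,k)) : 0 <= a -> mle 0 D -> mle 0 (a *: D).
Proof.
move=> ha hD i j; rewrite !mxE; apply: mulr_ge0 => //.
by have := hD i j; rewrite mxE.
Qed.

Lemma mle_addD (D1 D2 : 'M[R]_(n,k)) : mle 0 D1 -> mle 0 D2 -> mle 0 (D1 + D2).
Proof.
move=> h1 h2 i j; rewrite !mxE; apply: addr_ge0.
  by have := h1 i j; rewrite mxE.
by have := h2 i j; rewrite mxE.
Qed.

Lemma Vm_ge0 jt : mle 0 (Vm jt).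
Proof. by move=> i j; rewrite !mxE; case: (_ == _). Qed.
Lemma Om_ge0 o : mle 0 (Om o).
Proof. by move=> i j; rewrite !mxE; case: (_ == _). Qed.

Lemma rowV jt i : \sum_j Vm jt i j = 1.
Proof. by under eq_bigr do rewrite mxE; exact: sum_delta. Qed.

Lemma rowO o i : \sum_j Om o i j <= 1.
Proof.
under eq_bigr do rewrite mxE.
case e: (o i) => [j0|].
  by rewrite (sum_ind R j0) lexx.
by rewrite big1.
Qed.

Lemma rowD (A D : 'M[R]_(n,k)) i : \sum_j (A + D) i j = \sum_j A i j + \sum_j D i j.
Proof. by rewrite -big_split; apply: eq_bigr => j _; rewrite mxE. Qed.
Lemma rowZ (a : R) (D : 'M[R]_(n,k)) i : \sum_j (a *: D) i j = a * \sum_j D i j.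
Proof. by rewrite mulr_sumr; apply: eq_bigr => j _; rewrite mxE. Qed.

Lemma inQ_comb x o jt (a b : R) : 0 <= a -> 0 <= b -> mle 0 x ->
  (forall i, \sum_j x i j + a + b <= 1) -> inQ (x + a *: Om o + b *: Vm jt).
Proof.
move=> ha hb hx hs; split.
  move=> i j; have := hx i j; have := mle_scale ha (@Om_ge0 o) i j.
  have := mle_scale hb (@Vm_ge0 jt) i j; rewrite !mxE; lra.
move=> i; rewrite !rowD !rowZ rowV.
have h1 := hs i; have h2 := rowO o i.
have h0 : 0 <= \sum_j Om o i j.
  by apply: sumr_ge0 => j _; have := Om_ge0 o i j; rewrite mxE.
have : a * \sum_j Om o i j <= a * 1 by apply: ler_wpM2l.
rewrite mulr1; lra.
Qed.

Lemma sumV jt (F : pT n k -> R) :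
  \sum_(p : pT n k) Vm jt p.1 p.2 * F p = \sum_i F (i, jt i).
Proof.
transitivity (\sum_i \sum_j Vm jt i j * F (i, j)).
  by rewrite pair_bigA /=; apply: eq_bigr => -[i j].
apply: eq_bigr => i _; rewrite (bigD1 (jt i)) //= mxE eqxx mul1r big1 ?addr0 //.
by move=> j hj; rewrite mxE (negPf hj) mul0r.
Qed.

Lemma sumO o (F : pT n k -> R) :
  \sum_(p : pT n k) Om o p.1 p.2 * F p = \sum_i (if o i is Some j then F (i, j) else 0).
Proof.
transitivity (\sum_i \sum_j Om o i j * F (i, j)).
  by rewrite pair_bigA /=; apply: eq_bigr => -[i j].
apply: eq_bigr => i _; case e: (o i) => [j0|].
  rewrite (bigD1 j0) //= mxE e eqxx mul1r big1 ?addr0 //.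
  move=> j hj; rewrite mxE e; have -> : (Some j0 == Some j) = false.
    by apply/negbTE; apply: contra hj => /eqP [->].
  by rewrite mul0r.
by rewrite big1 // => j _; rewrite mxE e mul0r.
Qed.

Lemma msumZV (d : R) jt : msum (d *: Vm jt) = d * n%:R.
Proof.
rewrite /msum.
transitivity (d * \sum_(p : pT n k) Vm jt p.1 p.2 * 1).
  by rewrite mulr_sumr; apply: eq_bigr => p _; rewrite mxE mulr1.
by rewrite sumV sumr_const card_ord.
Qed.

Lemma msum_le (D1 D2 : 'M[R]_(n,k)) : mle D1 D2 -> msum D1 <= msum D2.
Proof. by move=> h; apply: ler_sum => p _; exact: h. Qed.

Lemma dsumZ (a : R) (D : 'M[R]_(n,k)) :
  dsum (index_enum (pT n k)) (fun p => a * D p.1 p.2) = a *: D.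
Proof.
rewrite [RHS]dsum_full; congr dsum; apply: funext => p; by rewrite mxE.
Qed.

Lemma step (x : 'M[R]_(n,k)) (jt : 'I_n -> 'I_k) (o : asg n k) (d c : R) :
  0 <= d -> 0 <= c -> mle 0 x -> (forall i, \sum_j x i j + d + c <= 1) ->
  (forall i j, ML (Md i j g) x <= ML (Md i (jt i) g) x) ->
  ML g (x + (c + d) *: Om o) - ML g (x + d *: Vm jt + c *: Om o)
   <= ML g (x + d *: Vm jt) - ML g x + (B + B) * (d * n%:R) * (d * n%:R).
Proof.
move=> hd hc hx hs hgr.
set V := Vm jt; set O := Om o.
have hB := B_ge0.
have hV := @Vm_ge0 jt; have hO := @Om_ge0 o.
have Qs1 : inQ (x + d *: V).
  have := @inQ_comb x o jt 0 d (lexx 0) hd hx.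
  by rewrite scale0r addr0; apply => i; have := hs i; lra.
have Qy0 : inQ (x + (c + d) *: O).
  have := @inQ_comb x o jt (c + d) 0 _ (lexx 0) hx.
  rewrite scale0r addr0; apply; first by lra.
  by move=> i; have := hs i; lra.
have Qy1 : inQ (x + d *: V + c *: O).
  have := @inQ_comb x o jt c d hc hd hx.
  rewrite -addrA [c *: O + _]addrC addrA; apply => i; have := hs i; lra.
pose S := \sum_i ML (Md i (jt i) g) x.
have gain : ML g x + d * S - (B + B) * (d * n%:R) * (d * n%:R) <= ML g (x + d *: V).
  have key : ML g x + \sum_(p <- index_enum (pT n k)) (d * V p.1 p.2) *
       (ML (Md p.1 p.2 g) x - (B + B) * (d * n%:R))
     <= ML g (x + dsum (index_enum (pT n k)) (fun p => d * V p.1 p.2)).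
    apply: (@tele_ge R n k g x (x + d *: V)).
    - move=> p y hxy hys.
      have := ML_lip p hx Qs1 hxy hys.
      have : msum (y - x) <= d * n%:R.
        rewrite -(msumZV d jt); apply: msum_le => i j.
        have := hys i j; rewrite !mxE; lra.
      move=> h1 h2; apply: le_trans h2; rewrite lerD2l lerN2.
      by apply: ler_wpM2l => //; lra.
    - by move=> p; apply: mulr_ge0 => //; have := hV p.1 p.2; rewrite mxE.
    - exact: mle_refl.
    - by rewrite dsumZ; apply: mle_refl.
  rewrite dsumZ in key; apply: le_trans key; rewrite -addrA lerD2l.
  have -> : \sum_(p <- index_enum (pT n k)) d * V p.1 p.2 * (ML (Md p.1 p.2 g) x - (B + B) * (d * n%:R))
     = d * \sum_(p : pT n k) V p.1 p.2 * ML (Md p.1 p.2 g) x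
       - (B + B) * (d * n%:R) * (d * \sum_(p : pT n k) V p.1 p.2 * 1).
    rewrite !mulr_sumr -sumrB; apply: eq_bigr => p _; ring.
  rewrite /V !sumV /S.
  have -> : \sum_(i < n) (1 : R) = n%:R by rewrite sumr_const card_ord.
  by rewrite [d * n%:R]mulrC.
have L1 : ML g (x + (c + d) *: O) <= ML g (x + c *: O) +
     \sum_(p <- index_enum (pT n k)) (d * O p.1 p.2) * ML (Md p.1 p.2 g) x.
  have e : x + (c + d) *: O = x + c *: O + dsum (index_enum (pT n k)) (fun p => d * O p.1 p.2).
    by rewrite dsumZ scalerDl addrA.
  rewrite e; apply: (@tele_le R n k g x (x + (c + d) *: O) (fun p => ML (Md p.1 p.2 g) x)).
  - move=> p y hxy hyy /=; apply: (ML_anti p hx Qy0 hxy hyy).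
  - by move=> p; apply: mulr_ge0 => //; have := hO p.1 p.2; rewrite mxE.
  - by apply: mle_addr; apply: mle_scale.
  - by rewrite -e; apply: mle_refl.
have L2 : ML g (x + c *: O) <= ML g (x + d *: V + c *: O).
  have e : x + d *: V + c *: O = x + c *: O + dsum (index_enum (pT n k)) (fun p => d * V p.1 p.2).
    by rewrite dsumZ addrAC.
  have hx' : mle 0 (x + c *: O).
    by move=> i j; have := hx i j; have := mle_scale hc hO i j; rewrite !mxE; lra.
  rewrite e; apply: le_trans (@tele_ge R n k g (x + c *: O) (x + d *: V + c *: O)
      (fun _ => 0) _ (index_enum (pT n k)) (fun p => d * V p.1 p.2) (x + c *: O) _ _ _).
  - by rewrite big1 ?addr0 // => p _; rewrite mulr0.
  - move=> p y hxy hyy; apply: ML_ge; last by move=> a; exact: gmono.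
    exact: inQ_le (mle_trans hx' hxy) hyy Qy1.
  - by move=> p; apply: mulr_ge0 => //; have := hV p.1 p.2; rewrite mxE.
  - exact: mle_refl.
  - by rewrite -e; apply: mle_refl.
have hSO : \sum_(p <- index_enum (pT n k)) (d * O p.1 p.2) * ML (Md p.1 p.2 g) x <= d * S.
  have -> : \sum_(p <- index_enum (pT n k)) (d * O p.1 p.2) * ML (Md p.1 p.2 g) x
      = d * \sum_(p : pT n k) O p.1 p.2 * ML (Md p.1 p.2 g) x.
    by rewrite mulr_sumr; apply: eq_bigr => p _; rewrite mulrA.
  apply: ler_wpM2l => //; rewrite /O sumO /S; apply: ler_sum => i _.
  case: (o i) => [j|] /=; first exact: hgr.
  apply: ML_ge; last by move=> a; exact: gmono.
  apply: inQ_le Qs1 => //; apply: mle_addr; exact: mle_scale.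
move: gain L1 L2 hSO; rewrite /S /V /O; clear -hd.
set A1 := ML g _; set A2 := ML g _; set A3 := ML g _; set A4 := ML g _; set A5 := ML g _.
set T1 := \sum_(p <- _) _; set T2 := \sum_i _.
clearbody A1 A2 A3 A4 A5 T1 T2. lra.
Qed.

Lemma ML_O o : ML g (Om o) = g o.
Proof.
have wO : forall m b, wt (Om o) m b = (o m == b)%:R.
  move=> m [j|] /=; first by rewrite mxE.
  under eq_bigr do rewrite mxE.
  case e: (o m) => [j0|]; last by rewrite big1 // subr0.
  by rewrite (sum_ind R j0) subrr.
rewrite /ML (bigD1 o) //= big1 ?addr0.
  by rewrite /Wt big1 ?mulr1 // => m _; rewrite wO eqxx.
move=> a ao; rewrite /Wt.
have [m hm] : exists m, o m != a m.
  apply/existsP; move: ao; apply: contraR => /existsPn h.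
  by apply/eqP/ffunP => m; have := h m; rewrite negbK => /eqP.
by rewrite (bigD1 m) //= wO (negPf hm) mul0r mulr0.
Qed.

Lemma inv_s N (s : nat -> 'M[R]_(n,k)) (jsel : nat -> 'I_n -> 'I_k) :
  s 0%N = 0 -> (forall t, (t < N)%N -> s t.+1 = s t + N%:R^-1 *: Vm (jsel t)) ->
  forall t, (t <= N)%N -> mle 0 (s t) /\ forall i, \sum_j s t i j = t%:R * N%:R^-1.
Proof.
move=> h0 hs; elim=> [|t IH] ht.
  rewrite h0; split; first exact: mle_refl.
  by move=> i; rewrite mul0r big1 // => j _; rewrite mxE.
have [IH1 IH2] := IH (ltnW ht).
have hN : 0 <= N%:R^-1 :> R by rewrite invr_ge0.
rewrite hs //; split.
  apply: mle_trans IH1 _; apply: mle_addr; apply: mle_scale => //; exact: Vm_ge0.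
by move=> i; rewrite rowD rowZ rowV IH2 mulr1 -natr1 mulrDl mul1r.
Qed.

Lemma run (N : nat) (s : nat -> 'M[R]_(n,k)) (jsel : nat -> 'I_n -> 'I_k) (o : asg n k) :
  (0 < N)%N -> s 0%N = 0 ->
  (forall t, (t < N)%N -> forall i j, ML (Md i j g) (s t) <= ML (Md i (jsel t i) g) (s t)) ->
  (forall t, (t < N)%N -> s t.+1 = s t + N%:R^-1 *: Vm (jsel t)) ->
  g o + ML g 0 <= 2 * ML g (s N) + N%:R * ((B + B) * (N%:R^-1 * n%:R) * (N%:R^-1 * n%:R)).
Proof.
move=> hN h0 hgr hs.
set dl := N%:R^-1 : R.
set E := (B + B) * (dl * n%:R) * (dl * n%:R).
pose y t := s t + (1 - t%:R * dl) *: Om o.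
have hdl : 0 <= dl by rewrite invr_ge0.
have hNdl : N%:R * dl = 1 by rewrite /dl mulfV // pnatr_eq0 -lt0n.
have hE : 0 <= E.
  by rewrite /E; apply: mulr_ge0; [apply: mulr_ge0|]; rewrite ?mulr_ge0 ?addr_ge0 ?B_ge0.
have key : forall t, (t <= N)%N ->
    ML g (y 0%N) - ML g (y t) <= ML g (s t) - ML g (s 0%N) + t%:R * E.
  elim=> [|t IH] ht; first by rewrite !subrr mul0r addr0.
  have := IH (ltnW ht).
  have [Is1 Is2] := inv_s h0 hs (ltnW ht).
  have hc : 0 <= 1 - t.+1%:R * dl.
    rewrite subr_ge0; apply: (@le_trans _ _ (N%:R * dl)); last by rewrite hNdl.
    by apply: ler_wpM2r => //; rewrite ler_nat.
  have := @step (s t) (jsel t) o dl (1 - t.+1%:R * dl) hdl hc Is1.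
  have ey : y t = s t + ((1 - t.+1%:R * dl) + dl) *: Om o.
    by rewrite /y -natr1; congr (_ + _ *: _); ring.
  have ey1 : y t.+1 = s t + dl *: Vm (jsel t) + (1 - t.+1%:R * dl) *: Om o.
    by rewrite /y hs.
  rewrite -ey -ey1 -hs // -/E => H1 H2.
  have : ML g (y t) - ML g (y t.+1) <= ML g (s t.+1) - ML g (s t) + E.
    apply: H1; last exact: (hgr t ht).
    by move=> i; rewrite Is2 -/dl -natr1 mulrDl mul1r; lra.
  rewrite -natr1 mulrDl mul1r.
  move: H2; set a1 := ML g _; set a2 := ML g _; set a3 := ML g _; set a4 := ML g _;
    set a5 := ML g _; set a6 := ML g _.
  move=> H2 H3; clear -H2 H3; clearbody a1 a2 a3 a4 a5 a6.
  lra.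
have := key N (leqnn N).
have -> : y 0%N = Om o by rewrite /y h0 mul0r subr0 scale1r add0r.
have -> : y N = s N by rewrite /y hNdl subrr scale0r addr0.
rewrite ML_O h0 -/E.
move=> H; clear -H; set a1 := ML g _ in H *; set a2 := ML g _ in H *.
clearbody a1 a2; lra.
Qed.
End Main.

Lemma deriv_affine (R : realType) (n k : nat) (F : 'M[R]_(n,k) -> R) (v x : 'M[R]_(n,k)) (c : R) :
  (forall h : R, F (x + h *: v) = F x + h * c) -> 'D_v F x = c.
Proof.
move=> hF; rewrite /derive; apply: lim_near_cst; first exact: norm_hausdorff.
apply: filterS (nbhs_dnbhs_neq 0) => h h0.
rewrite /= [_ + x]addrC hF addrC addKr.
by rewrite /GRing.scale /= mulKf.
Qed.

Lemma D_ML (R : realType) (n k : nat) (g : asg n k -> R) i j x :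
  'D_(delta_mx i j) (ML g) x = ML (Md i j g) x.
Proof. by apply: deriv_affine => h; rewrite ML_shift. Qed.

Unset Implicit Arguments.

Theorem mainTheorem6 (R : realType) (n k : nat) (f : ktuple n k -> R) :
  (2 <= k)%N ->
  (forall S, 0 <= f S) -> k_monotone f -> k_submodular f ->
  (forall (N : nat) (s : nat -> 'M[R]_(n, k)) (jsel : nat -> 'I_n -> 'I_k),
      (0 < N)%N -> greedy_run (multilinear_ext f) N s jsel ->
      in_P (s N) /\ (forall i, \sum_(j < k) s N i j = 1)) /\
  (forall eps : R, 0 < eps -> exists N0 : nat, forall (N : nat)
      (s : nat -> 'M[R]_(n, k)) (jsel : nat -> 'I_n -> 'I_k),
      (0 < N)%N -> (N0 <= N)%N -> greedy_run (multilinear_ext f) N s jsel ->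
      multilinear_ext f (s N) >= OPT f / 2 - eps).
Proof.
move=> hk f0 hmono hsub.
split.
- move=> N s jsel hN [h0 hgr hs].
  have [I1 I2] := inv_s h0 hs (leqnn N).
  have rs : forall i, \sum_j s N i j = 1.
    by move=> i; rewrite I2 mulfV // pnatr_eq0 -lt0n.
  split; last exact: rs.
  split; last by move=> i; rewrite rs.
  move=> i j; apply/andP; split; first by have := I1 i j; rewrite mxE.
  rewrite -(rs i) (bigD1 j) //= lerDl; apply: sumr_ge0 => l _.
  by have := I1 i l; rewrite mxE.
- move=> eps heps.
  set OP := OPT f.
  have OP0 : 0 <= OP.
    exact: le_trans (f0 (tup ([ffun _ => None] : asg n k))) (f_le_OPT _ _).
  exists (Num.truncn (OP * n%:R ^+ 2 / eps)).+1.
  move=> N s jsel hN hN0 [h0 hgr hs].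
  rewrite ML_eq in hgr *.
  have [w ho] := OPT_attained f0.
  have hgr' : forall t, (t < N)%N -> forall i j,
      ML (Md i j (gf f)) (s t) <= ML (Md i (jsel t i) (gf f)) (s t).
    by move=> t ht i j; rewrite -!D_ML; exact: hgr.
  have H := @run R n k (gf f) OP (fun a => f0 _) (@g_le_OPT R n k f) (g_mono hmono) (g_DR hsub)
     N s jsel w hN h0 hgr' hs.
  have hM0 : 0 <= ML (gf f) 0.
    apply: ML_ge; last by move=> a; exact: f0.
    split; first by move=> i j; rewrite mxE.
    by move=> i; rewrite big1 // => j _; rewrite mxE.
  have hNr : (0 : R) < N%:R by rewrite ltr0n.
  have eT : N%:R * ((OP + OP) * (N%:R^-1 * n%:R) * (N%:R^-1 * n%:R))
            = 2 * (OP * n%:R ^+ 2 / N%:R).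
    by field; rewrite gt_eqF.
  have hT : OP * n%:R ^+ 2 / N%:R <= eps.
    rewrite ler_pdivrMr //.
    have := Num.Theory.truncnS_gt (OP * n%:R ^+ 2 / eps).
    have : ((Num.truncn (OP * n%:R ^+ 2 / eps)).+1%:R : R) <= N%:R by rewrite ler_nat.
    move=> h1 h2; have h3 := lt_le_trans h2 h1.
    rewrite ltr_pdivrMr // in h3.
    by rewrite [eps * _]mulrC; apply: ltW.
  rewrite eT in H.
  move: H hT ho hM0; set X := ML (gf f) (s N); set T := OP * n%:R ^+ 2 / N%:R.
  set Y := ML (gf f) 0; set Z := gf f w.
  move=> H1 H2 H3 H4; clear -H1 H2 H3 H4; clearbody X T Y Z.
  rewrite /OP; lra.
Qed.
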